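(* Let $X$ be a Banach space and $f_k:X\to\mathbb{R}\cup\{+\infty\}$ $(k\in\mathbb{N}\cup\{0\})$ proper convex functions such that $C:=\operatorname{dom}f_0\cap\{x: f_k(x)\le0\ \forall k\in\mathbb{N}\}\neq\emptyset$. Let $\bar x\in X$ be a solution of problem (P): minimize $f_0(x)$ subject to $f_k(x)\le 0$ $(k\in\mathbb{N})$, and suppose the Slater condition holds: there exists $x\in\operatorname{dom}f_0$ with $\sup_{k\in\mathbb{N}}f_k(x)<0$. Then: (i) There exists a solution $(\lambda_1,\lambda_2,\ldots)\in\ell^1_+$, $\lambda_\infty\in\mathbb{R}_+$ of (D), i.e., $f_0(\bar x)=\inf_{x\in X}\big(f_0(x)+\overline{\sum_{k\in\mathbb{N}}}\lambda_kf_k(x)+\lambda_\infty f_\infty(x)\big)$. Moreover, for any solution of (D), this infimum is attained at $\bar x$, and $\lambda_kf_k(\bar x)=0$ for all $k\in\mathbb{N}\cup\{\infty\}$. (ii) For any $m=0,1,\ldots$, there exists a solution $(\lambda_1,\lambda_2,\ldots)\in\ell^\infty_+$ of (D$_m$), i.e., $f_0(\bar x)=\inf_{x\in X}\big(f_0(x)+\sum_{k=1}^m\lambda_kf_k(x)+\sum_{k=m+1}^{\infty}\lambda_kf_k^+(x)\big)$. Moreover, for any solution of (D$_m$), this infimum is attained at $\bar x$, and $\lambda_kf_k(\bar x)=0$ for $k=1,\ldots,m$.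
   Context: Conventions: $0\cdot(+\infty)=+\infty$, $(+\infty)-(+\infty)=+\infty$. $\ell^1_+$, $\ell^\infty_+$: nonnegative sequences in $\ell^1$, $\ell^\infty$. $f_\infty(x):=\limsup_{k\to\infty}f_k(x)$, $f_k^+:=\max\{f_k,0\}$, and $\overline{\sum_{k\in\mathbb{N}}}\lambda_kf_k(x):=\limsup_{n\to\infty}\sum_{k=1}^n\lambda_kf_k(x)$. (D) is the problem $\sup_{\lambda\in\ell^1_+,\lambda_\infty\ge0}\inf_{x\in X}\big(f_0(x)+\overline{\sum_{k\in\mathbb{N}}}\lambda_kf_k(x)+\lambda_\infty f_\infty(x)\big)$; (D$_m$) is $\sup_{\lambda\in\ell^\infty_+}\inf_{x\in X}\big(f_0(x)+\sum_{k=1}^m\lambda_kf_k(x)+\sum_{k=m+1}^\infty\lambda_kf_k^+(x)\big)$ (first sum zero if $m=0$). A solution of a dual problem is a point attaining its supremum; a solution of (P) is a feasible point minimizing $f_0$ over the feasible set. *)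

(* Defs.v *)
From HB Require Import structures.
From mathcomp Require Import all_boot all_order all_algebra.
From mathcomp Require Import all_classical all_reals all_analysis.
Unset Printing Implicit Defensive.
Import Order.TTheory GRing.Theory Num.Theory.
Import numFieldNormedType.Exports.
Local Open Scope classical_set_scope.
Local Open Scope ring_scope.
Local Open Scope ereal_scope.

(* Indexing convention: the objective is [f0]; the constraint functions
   f_1, f_2, ... of the paper are [f 0], [f 1], ... (so [f k] is f_{k+1});
   multiplier sequences are indexed likewise ([lam k] is lambda_{k+1}). *)

(* product lambda * a with the convention 0 * (+oo) = +oo *)
Definition emulc {R : realType} (l : R) (a : \bar R) : \bar R :=
  if a == +oo then +oo else l%:E * a.

Definition proper_efun {R : realType} {X : Type} (g : X -> \bar R) : Prop :=
  (forall x, g x != -oo) /\ (exists x, g x < +oo).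

Definition convex_efun {R : realType} {X : lmodType R} (g : X -> \bar R) : Prop :=
  forall (x y : X) (t : R), (0 < t < 1)%R ->
    g (t *: x + (1 - t) *: y)%R <= t%:E * g x + (1 - t)%:E * g y.

Definition edom {R : realType} {X : Type} (g : X -> \bar R) : set X :=
  [set x | g x < +oo].

Definition feasible {R : realType} {X : Type} (f0 : X -> \bar R)
  (f : nat -> X -> \bar R) : set X :=
  [set x | f0 x < +oo /\ forall k, f k x <= 0].

Definition solutionP {R : realType} {X : Type} (f0 : X -> \bar R)
  (f : nat -> X -> \bar R) (xb : X) : Prop :=
  feasible f0 f xb /\ forall x, feasible f0 f x -> f0 xb <= f0 x.

Definition finf {R : realType} {X : Type} (f : nat -> X -> \bar R) (x : X) : \bar R :=
  limn_esup (fun k => f k x).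

Definition l1_plus {R : realType} (lam : nat -> R) : Prop :=
  (forall k, (0 <= lam k)%R) /\ \sum_(0 <= k <oo) (lam k)%:E < +oo.

Definition linf_plus {R : realType} (lam : nat -> R) : Prop :=
  (forall k, (0 <= lam k)%R) /\ exists M : R, forall k, (lam k <= M)%R.

(* Lagrangian of (D); additions use the convention (+oo) + (-oo) = +oo *)
Definition lagD {R : realType} {X : Type} (f0 : X -> \bar R)
  (f : nat -> X -> \bar R) (lam : nat -> R) (li : R) (x : X) : \bar R :=
  dual_adde
    (dual_adde (f0 x) (limn_esup (fun n => \sum_(0 <= k < n) emulc (lam k) (f k x))))
    (emulc li (finf f x)).

Definition dualD {R : realType} {X : Type} (f0 : X -> \bar R)
  (f : nat -> X -> \bar R) (lam : nat -> R) (li : R) : \bar R :=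
  ereal_inf (range (lagD f0 f lam li)).

Definition valD {R : realType} {X : Type} (f0 : X -> \bar R)
  (f : nat -> X -> \bar R) : \bar R :=
  ereal_sup [set v | exists lam li, [/\ l1_plus lam, (0 <= li)%R & v = dualD f0 f lam li]].

Definition solutionD {R : realType} {X : Type} (f0 : X -> \bar R)
  (f : nat -> X -> \bar R) (lam : nat -> R) (li : R) : Prop :=
  [/\ l1_plus lam, (0 <= li)%R & dualD f0 f lam li = valD f0 f].

Definition lagDm {R : realType} {X : Type} (m : nat) (f0 : X -> \bar R)
  (f : nat -> X -> \bar R) (lam : nat -> R) (x : X) : \bar R :=
  dual_adde
    (dual_adde (f0 x) (\sum_(0 <= k < m) emulc (lam k) (f k x)))
    (\sum_(m <= k <oo) emulc (lam k) (Order.max (f k x) 0)).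

Definition dualDm {R : realType} {X : Type} (m : nat) (f0 : X -> \bar R)
  (f : nat -> X -> \bar R) (lam : nat -> R) : \bar R :=
  ereal_inf (range (lagDm m f0 f lam)).

Definition valDm {R : realType} {X : Type} (m : nat) (f0 : X -> \bar R)
  (f : nat -> X -> \bar R) : \bar R :=
  ereal_sup [set v | exists lam, linf_plus lam /\ v = dualDm m f0 f lam].

Definition solutionDm {R : realType} {X : Type} (m : nat) (f0 : X -> \bar R)
  (f : nat -> X -> \bar R) (lam : nat -> R) : Prop :=
  linf_plus lam /\ dualDm m f0 f lam = valDm m f0 f.

(* Main.v *)
Require Import Defs.
From HB Require Import structures.
From mathcomp Require Import all_boot all_order all_algebra.
From mathcomp Require Import all_classical all_reals all_analysis.
From mathcomp Require Import ring lra.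
Import Order.TTheory GRing.Theory Num.Theory.
Import numFieldNormedType.Exports.
Local Open Scope classical_set_scope.
Local Open Scope ring_scope.
Local Open Scope ereal_scope.


Local Close Scope ereal_scope.

Lemma stepA_key (R : realType) (X : lmodType R) (D : set X) (F G : X -> R) (p : R) :
  (forall x y t, D x -> D y -> 0 < t < 1 -> D (t *: x + (1 - t) *: y)) ->
  (forall x y t, D x -> D y -> 0 < t < 1 -> F (t*:x + (1-t)*:y) <= t * F x + (1-t) * F y) ->
  (forall x y t, D x -> D y -> 0 < t < 1 -> G (t*:x + (1-t)*:y) <= t * G x + (1-t) * G y) ->
  (forall x, D x -> G x <= 0 -> p <= F x) ->
  forall x y, D x -> D y -> 0 < G x -> G y < 0 ->
  (p - F x) * (- G y) <= (F y - p) * G x.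
Proof.
move=> Dc Fc Gc Hf x y Dx Dy gx gy.
have spos : 0 < G x - G y by lra.
set t := - G y / (G x - G y).
have st : (G x - G y) * t = - G y by rewrite /t mulrC -mulrA mulVf ?mulr1 // gt_eqF.
have s1t : (G x - G y) * (1 - t) = G x by rewrite mulrBr mulr1 st; lra.
have t01 : 0 < t < 1.
  apply/andP; split; first by apply: divr_gt0; lra.
  by rewrite ltr_pdivrMr // mul1r; lra.
clearbody t.
have Gz : G (t *: x + (1 - t) *: y) <= 0.
  apply: le_trans (Gc _ _ _ Dx Dy t01) _.
  suff : (G x - G y) * (t * G x + (1 - t) * G y) <= 0 by rewrite pmulr_rle0.
  rewrite mulrDr !mulrA st s1t; lra.
have h := le_trans (Hf _ (Dc _ _ _ Dx Dy t01) Gz) (Fc _ _ _ Dx Dy t01).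
have := ler_wpM2l (ltW spos) h.
rewrite mulrDr !mulrA st s1t => h2.
nra.
Qed.

Lemma stepA (R : realType) (X : lmodType R) (D : set X) (F G : X -> R) (p : R) :
  (forall x y t, D x -> D y -> 0 < t < 1 -> D (t *: x + (1 - t) *: y)) ->
  (forall x y t, D x -> D y -> 0 < t < 1 -> F (t*:x + (1-t)*:y) <= t * F x + (1-t) * F y) ->
  (forall x y t, D x -> D y -> 0 < t < 1 -> G (t*:x + (1-t)*:y) <= t * G x + (1-t) * G y) ->
  (forall x, D x -> G x <= 0 -> p <= F x) ->
  (exists2 x0, D x0 & G x0 < 0) ->
  exists2 mu, 0 <= mu & forall x, D x -> p <= F x + mu * G x.
Proof.
move=> Dc Fc Gc Hf [y0 Dy0 gy0].
have key := @stepA_key R X D F G p Dc Fc Gc Hf.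
pose S := [set r | exists x, [/\ D x, 0 < G x & r = (p - F x) / G x]].
have ubS : forall y, D y -> G y < 0 -> ubound S ((F y - p) / (- G y)).
  move=> y Dy gy _ [x [Dx gx ->]].
  rewrite ler_pdivrMr // mulrC mulrA ler_pdivlMr //; last by rewrite oppr_gt0.
  by rewrite mulrC key.
have Hneg : forall y, D y -> G y < 0 -> 0 <= (F y - p) / (- G y).
  move=> y Dy gy; apply: divr_ge0; last by rewrite oppr_ge0 ltW.
  by rewrite subr_ge0 Hf // ltW.
have [S0|S0] := pselect (S !=set0); last first.
  exists 0 => // x Dx; rewrite mul0r addr0.
  have [gx|gx] := ltP 0 (G x); last exact: Hf.
  by exfalso; apply: S0; exists ((p - F x) / G x); exists x.
have hs : has_sup S by split => //; exists ((F y0 - p) / (- G y0)); exact: ubS.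
exists (Num.max 0 (sup S)); first by rewrite le_max lexx.
move=> x Dx.
have [gx|gx] := ltP 0 (G x).
  have : (p - F x) / G x <= Num.max 0 (sup S).
    rewrite le_max; apply/orP; right; apply: sup_upper_bound => //.
    by exists x.
  rewrite ler_pdivrMr // => h; lra.
have [gx0|gx0] := eqVneq (G x) 0.
  by rewrite gx0 mulr0 addr0; apply: Hf; rewrite ?gx0.
have gxn : G x < 0 by rewrite lt_neqAle gx0 gx.
have : Num.max 0 (sup S) <= (F x - p) / (- G x).
  rewrite ge_max Hneg //=; apply: ge_sup => //; exact: ubS.
rewrite ler_pdivlMr ?oppr_gt0 // => h; nra.
Qed.

Local Open Scope ereal_scope.
Local Open Scope ereal_scope.

Lemma limn_esupE {R : realType} (u : (\bar R)^nat) :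
  limn_esup u = ereal_inf (range (esups u)).
Proof. by rewrite limn_esup_lim; apply: cvg_lim => //; exact: cvg_esups_inf. Qed.

Lemma limsup_le_esups {R : realType} (u : (\bar R)^nat) n : limn_esup u <= esups u n.
Proof. by rewrite limn_esupE; apply: ereal_inf_lbound; exists n. Qed.

Lemma esups_ge {R : realType} (u : (\bar R)^nat) n k : (n <= k)%N -> u k <= esups u n.
Proof. by move=> nk; apply: ereal_sup_ubound; exists k. Qed.

Lemma esups_leP {R : realType} (u : (\bar R)^nat) n a :
  esups u n <= a <-> forall k, (n <= k)%N -> u k <= a.
Proof.
split => [h k nk|h]; first by apply: le_trans h; apply: esups_ge.
by apply: ge_ereal_sup => _ [k nk <-]; exact: h.
Qed.

Lemma ev_lt {R : realType} (u : (\bar R)^nat) r :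
  limn_esup u < r -> exists N, forall n, (N <= n)%N -> u n < r.
Proof.
rewrite limn_esupE => /ereal_inf_lt [_ [N _ <-]] h.
exists N => n Nn; apply: le_lt_trans h; exact: esups_ge.
Qed.

Lemma esups0 {R : realType} (u : (\bar R)^nat) : esups u 0%N = ereal_sup (range u).
Proof.
rewrite /esups /=; congr ereal_sup; apply/seteqP; split => _ [k _ <-]; by exists k.
Qed.

Lemma esups_finite {R : realType} (u : (\bar R)^nat) n :
  (forall k, u k < +oo) -> esups u n < +oo -> esups u 0%N < +oo.
Proof.
move=> uf; elim: n => // n IH h; apply: IH.
have : esups u n <= Order.max (u n) (esups u n.+1).
  apply/esups_leP => k nk; rewrite le_max.
  move: nk; rewrite leq_eqVlt => /orP [/eqP ->|nk]; first by rewrite lexx.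
  by rewrite (esups_ge u _ _ nk) orbT.
move/le_lt_trans; apply; rewrite gt_max uf h //.
Qed.

Local Open Scope ereal_scope.
Local Open Scope ereal_scope.

Definition goodE {R : realType} {X : Type} (f0 : X -> \bar R) (f : nat -> X -> \bar R) x :=
  f0 x < +oo /\ ereal_sup (range (fun k => f k x)) < +oo.

Definition TT {R : realType} {X : Type} (f : nat -> X -> \bar R) n x :=
  esups (fun k => f k x) n.

Lemma fin_of {R : realType} (a : \bar R) : a != -oo -> a < +oo -> a \is a fin_num.
Proof. by case: a. Qed.

Lemma fk_le_sup {R : realType} {X : Type} (f : nat -> X -> \bar R) x k :
  f k x <= ereal_sup (range (fun k => f k x)).
Proof. by apply: ereal_sup_ubound; exists k. Qed.

Lemma fin_fk {R : realType} {X : Type} {f0 : X -> \bar R} {f : nat -> X -> \bar R} {x k} :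
  (forall k, proper_efun (f k)) -> goodE f0 f x -> f k x \is a fin_num.
Proof.
move=> pf [_ hs]; apply: fin_of; first by case: (pf k).
exact: le_lt_trans (fk_le_sup f x k) hs.
Qed.

Lemma fin_f0 {R : realType} {X : Type} {f0 : X -> \bar R} {f : nat -> X -> \bar R} {x} :
  proper_efun f0 -> goodE f0 f x -> f0 x \is a fin_num.
Proof. by move=> [p0 _] [h _]; apply: fin_of. Qed.

Lemma TT_le_sup {R : realType} {X : Type} (f : nat -> X -> \bar R) n x :
  TT f n x <= ereal_sup (range (fun k => f k x)).
Proof. by apply/esups_leP => k _; exact: fk_le_sup. Qed.

Lemma fin_TT {R : realType} {X : Type} {f0 : X -> \bar R} {f : nat -> X -> \bar R} {x n} :
  (forall k, proper_efun (f k)) -> goodE f0 f x -> TT f n x \is a fin_num.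
Proof.
move=> pf gx; apply: fin_of.
  have h : f n x <= TT f n x by apply: esups_ge.
  apply/negP => /eqP e; rewrite e leeNy_eq in h.
  by case: (pf n) => /(_ x); rewrite h.
exact: le_lt_trans (TT_le_sup f n x) gx.2.
Qed.

Lemma fine_conv {R : realType} (a b c : \bar R) (t : R) :
  a \is a fin_num -> b \is a fin_num -> c \is a fin_num ->
  a <= t%:E * b + (1 - t)%:E * c -> (fine a <= t * fine b + (1 - t) * fine c)%R.
Proof.
move=> fa fb fc; rewrite -(fineK fa) -(fineK fb) -(fineK fc) /=.
by rewrite -!EFinM -EFinD lee_fin.
Qed.

Lemma comb_le {R : realType} (a b a' b' : \bar R) (t : R) :
  a \is a fin_num -> b \is a fin_num -> a' \is a fin_num -> b' \is a fin_num ->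
  (0 <= t <= 1)%R -> a <= a' -> b <= b' ->
  t%:E * a + (1 - t)%:E * b <= t%:E * a' + (1 - t)%:E * b'.
Proof.
move=> fa fb fa' fb' /andP[t0 t1] ha hb.
have ha2 := fine_le fa fa' ha; have hb2 := fine_le fb fb' hb.
rewrite -(fineK fa) -(fineK fb) -(fineK fa') -(fineK fb') -!EFinM -!EFinD lee_fin.
by apply: lerD; apply: ler_wpM2l => //; rewrite subr_ge0.
Qed.

Lemma fin_sup {R : realType} {X : Type} {f0 : X -> \bar R} {f : nat -> X -> \bar R} {x} :
  (forall k, proper_efun (f k)) -> goodE f0 f x ->
  ereal_sup (range (fun k => f k x)) \is a fin_num.
Proof.
move=> pf gx; apply: fin_of; last exact: gx.2.
apply/negP => /eqP e; have := fk_le_sup f x 0%N; rewrite e leeNy_eq => h.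
by case: (pf 0%N) => /(_ x); rewrite h.
Qed.

Lemma goodE_conv {R : realType} {X : lmodType R} (f0 : X -> \bar R) (f : nat -> X -> \bar R) x y (t : R) :
  proper_efun f0 -> (forall k, proper_efun (f k)) ->
  convex_efun f0 -> (forall k, convex_efun (f k)) ->
  goodE f0 f x -> goodE f0 f y -> (0 < t < 1)%R -> goodE f0 f (t *: x + (1 - t) *: y)%R.
Proof.
move=> p0 pf c0 cf gx gy t01.
have fx0 := fin_f0 p0 gx; have fy0 := fin_f0 p0 gy.
split.
  apply: le_lt_trans (c0 _ _ _ t01) _.
  by rewrite -(fineK fx0) -(fineK fy0) -!EFinM -EFinD ltry.
have fsx := fin_sup pf gx; have fsy := fin_sup pf gy.
apply: (@le_lt_trans _ _ (t%:E * ereal_sup (range (fun k => f k x)) +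
   (1 - t)%:E * ereal_sup (range (fun k => f k y)))); last first.
  by rewrite -(fineK fsx) -(fineK fsy) -!EFinM -EFinD ltry.
apply: ge_ereal_sup => _ [k _ <-].
apply: le_trans (cf k _ _ _ t01) _.
have t01' : (0 <= t <= 1)%R by case/andP: t01 => ? ?; rewrite !ltW.
apply: comb_le => //; try exact: (fin_fk pf gx); try exact: (fin_fk pf gy); exact: fk_le_sup.
Qed.

Lemma TT_conv {R : realType} {X : lmodType R} (f0 : X -> \bar R) (f : nat -> X -> \bar R) n x y (t : R) :
  (forall k, proper_efun (f k)) -> (forall k, convex_efun (f k)) ->
  goodE f0 f x -> goodE f0 f y -> (0 < t < 1)%R ->
  TT f n (t *: x + (1 - t) *: y)%R <= t%:E * TT f n x + (1 - t)%:E * TT f n y.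
Proof.
move=> pf cf gx gy t01.
apply/esups_leP => k nk.
apply: le_trans (cf k _ _ _ t01) _.
have t01' : (0 <= t <= 1)%R by case/andP: t01 => ? ?; rewrite !ltW.
apply: comb_le => //; try exact: (fin_fk pf gx); try exact: (fin_fk pf gy); try exact: (fin_TT pf gx); try exact: (fin_TT pf gy); exact: esups_ge.
Qed.

Local Open Scope ereal_scope.
Local Open Scope ereal_scope.

Definition Hyp {R : realType} {X : lmodType R} (f0 : X -> \bar R) (f : nat -> X -> \bar R) xb x0 :=
  [/\ proper_efun f0, convex_efun f0, (forall k, proper_efun (f k)),
      (forall k, convex_efun (f k)) &
      solutionP f0 f xb /\ (edom f0 x0 /\ ereal_sup (range (fun k => f k x0)) < 0)].

Definition Qp {R : realType} {X : lmodType R} (f0 : X -> \bar R) (f : nat -> X -> \bar R) xb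
  n (l : nat -> R) :=
  (forall j, (j < n)%N -> (0 <= l j)%R) /\
  forall x, goodE f0 f x -> TT f n x <= 0 ->
    (fine (f0 xb) <= fine (f0 x) + \sum_(0 <= j < n) l j * fine (f j x))%R.

Lemma goodE_x0 {R : realType} {X : lmodType R} {f0 : X -> \bar R} {f xb x0} :
  Hyp f0 f xb x0 -> goodE f0 f x0.
Proof. by case=> _ _ _ _ [_ [h1 h2]]; split => //; apply: lt_trans h2 _. Qed.

Lemma goodE_xb {R : realType} {X : lmodType R} {f0 : X -> \bar R} {f xb x0} :
  Hyp f0 f xb x0 -> goodE f0 f xb.
Proof.
case=> _ _ _ _ [[[h1 h2] _] _]; split => //.
by apply: (@le_lt_trans _ _ 0) => //; apply: ge_ereal_sup => _ [k _ <-]; exact: h2.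
Qed.

Lemma conv_real {R : realType} {X : lmodType R} {f0 : X -> \bar R} {f xb x0} {g : X -> \bar R} {x y} {t : R} :
  Hyp f0 f xb x0 -> goodE f0 f x -> goodE f0 f y -> (0 < t < 1)%R ->
  (forall z, goodE f0 f z -> g z \is a fin_num) ->
  g (t *: x + (1 - t) *: y)%R <= t%:E * g x + (1 - t)%:E * g y ->
  (fine (g (t *: x + (1 - t) *: y)%R) <= t * fine (g x) + (1 - t) * fine (g y))%R.
Proof.
case=> p0 c0 pf cf _ gx gy t01 fg h; apply: fine_conv => //; try exact: fg.
exact/fg/goodE_conv.
Qed.

Lemma obj_conv {R : realType} {X : lmodType R} {f0 : X -> \bar R} {f xb x0 n} {l : nat -> R} {x y} {t : R} :
  Hyp f0 f xb x0 -> (forall j, (j < n)%N -> (0 <= l j)%R) ->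
  goodE f0 f x -> goodE f0 f y -> (0 < t < 1)%R ->
  (fine (f0 (t *: x + (1 - t) *: y)) + \sum_(0 <= j < n) l j * fine (f j (t *: x + (1 - t) *: y))
   <= t * (fine (f0 x) + \sum_(0 <= j < n) l j * fine (f j x)) +
      (1 - t) * (fine (f0 y) + \sum_(0 <= j < n) l j * fine (f j y)))%R.
Proof.
move=> H l0 gx gy t01; have H' := H; case: H' => p0 c0 pf cf _.
have h0 := conv_real H gx gy t01 (fun z gz => fin_f0 p0 gz) (c0 _ _ _ t01).
have hs : (\sum_(0 <= j < n) l j * fine (f j (t *: x + (1 - t) *: y))
   <= t * (\sum_(0 <= j < n) l j * fine (f j x)) +
      (1 - t) * (\sum_(0 <= j < n) l j * fine (f j y)))%R.
  rewrite !mulr_sumr -big_split /=; apply: ler_sum_nat => j /andP[_ jn].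
  have hj := conv_real H gx gy t01 (fun z gz => fin_fk pf gz) (cf j _ _ _ t01).
  apply: le_trans (ler_wpM2l (l0 _ jn) hj) _.
  by rewrite le_eqVlt; apply/orP; left; apply/eqP; ring.
rewrite mulrDr mulrDr addrACA; exact: lerD.
Qed.

Lemma Qp0 {R : realType} {X : lmodType R} {f0 : X -> \bar R} {f xb x0} {l : nat -> R} :
  Hyp f0 f xb x0 -> Qp f0 f xb 0 l.
Proof.
move=> H; have H' := H; case: H' => p0 c0 pf cf [[_ opt] _].
split => // x gx T0; rewrite big_geq // addr0.
apply: fine_le; [exact: fin_f0 p0 (goodE_xb H)|exact: fin_f0 p0 gx|].
apply: opt; split; first exact: gx.1.
by move=> k; move/esups_leP: T0; apply.
Qed.

Lemma Qp_ext {R : realType} {X : lmodType R} (f0 : X -> \bar R) f xb n (l l' : nat -> R) :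
  (forall j, (j < n)%N -> l j = l' j) -> Qp f0 f xb n l -> Qp f0 f xb n l'.
Proof.
move=> e [h1 h2]; split => [j jn|x gx T]; first by rewrite -e // h1.
rewrite -(eq_big_nat _ _ (F1 := fun j => l j * fine (f j x))%R); first exact: h2.
by move=> j /andP[_ jn]; rewrite e.
Qed.

Definition upd {R : realType} (l : nat -> R) n (mu : R) : nat -> R :=
  fun j => if j == n then mu else l j.

Lemma fin_le0 {R : realType} (a : \bar R) : a \is a fin_num -> (fine a <= 0)%R -> a <= 0.
Proof. by move=> fa h; rewrite -(fineK fa) lee_fin. Qed.

Lemma fin_lt0 {R : realType} (a : \bar R) : a \is a fin_num -> a < 0 -> (fine a < 0)%R.
Proof. by move=> fa; rewrite -{1}(fineK fa) lte_fin. Qed.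

Lemma comb_le0 {R : realType} (a b : \bar R) (t : R) :
  a \is a fin_num -> b \is a fin_num -> (0 < t < 1)%R -> a <= 0 -> b <= 0 ->
  t%:E * a + (1 - t)%:E * b <= 0.
Proof.
move=> fa fb t01 ha hb.
have t01' : (0 <= t <= 1)%R by case/andP: t01 => ? ?; rewrite !ltW.
have h0 : (0 : \bar R) \is a fin_num by [].
by have := @comb_le _ a b 0 0 t fa fb h0 h0 t01' ha hb; rewrite !mule0 adde0.
Qed.

Lemma Qp_step {R : realType} {X : lmodType R} {f0 : X -> \bar R} {f xb x0 n} {l : nat -> R} :
  Hyp f0 f xb x0 -> Qp f0 f xb n l -> exists mu, Qp f0 f xb n.+1 (upd l n mu).
Proof.
move=> H [l0 Q]; have H' := H; case: H' => p0 c0 pf cf [_ [_ sl]].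
have gx0 := goodE_x0 H.
pose D := [set x | goodE f0 f x /\ TT f n.+1 x <= 0].
pose F := (fun x => fine (f0 x) + \sum_(0 <= j < n) l j * fine (f j x))%R.
pose G := (fun x => fine (f n x)).
have [mu mu0 hmu] : exists2 mu, (0 <= mu)%R & forall x, D x -> (fine (f0 xb) <= F x + mu * G x)%R;
  first apply: stepA.
- move=> x y t [gx Tx] [gy Ty] t01; split; first exact: goodE_conv.
  apply: le_trans (TT_conv _ _ n.+1 _ _ _ pf cf gx gy t01) _.
  by apply: comb_le0 => //; [exact: (fin_TT pf gx)|exact: (fin_TT pf gy)].
- by move=> x y t [gx _] [gy _] t01; rewrite /F; exact: (obj_conv H l0 gx gy t01).
- by move=> x y t [gx _] [gy _] t01; exact: (conv_real H gx gy t01 (fun z gz => fin_fk pf gz) (cf n _ _ _ t01)).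
- move=> x [gx Tx] hn; apply: Q => //; apply/esups_leP => k nk.
  move: nk; rewrite leq_eqVlt => /orP [/eqP <-|nk]; first exact: fin_le0 (fin_fk pf gx) hn.
  by move/esups_leP: Tx; apply.
- exists x0; first split => //.
    by apply: ltW; apply: le_lt_trans (TT_le_sup _ _ _) sl.
  by apply: fin_lt0 (fin_fk pf gx0) _; apply: le_lt_trans (fk_le_sup _ _ _) sl.
exists mu; split.
  move=> j; rewrite ltnS leq_eqVlt /upd => /orP [/eqP ->|jn]; [by rewrite eqxx|by rewrite ltn_eqF //; exact: l0].
move=> x gx T; rewrite big_nat_recr //= {2}/upd eqxx.
rewrite (eq_big_nat _ _ (F2 := fun j => l j * fine (f j x))%R); last first.
  by move=> j /andP[_ jn]; rewrite /upd ltn_eqF.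
rewrite addrA; apply: (hmu x); split => //.
Qed.

Lemma lam_exists {R : realType} {X : lmodType R} {f0 : X -> \bar R} {f xb x0} :
  Hyp f0 f xb x0 -> exists lam : nat -> R, forall n, Qp f0 f xb n lam.
Proof.
move=> H.
have hex : forall nl : nat * (nat -> R), exists mu,
   Qp f0 f xb nl.1 nl.2 -> Qp f0 f xb nl.1.+1 (upd nl.2 nl.1 mu).
  move=> [n l] /=; have [q|nq] := pselect (Qp f0 f xb n l).
    by have [mu hm] := Qp_step H q; exists mu.
  by exists 0%R.
have [g hg] := choice hex.
pose sF := fix sF n := if n is m.+1 then upd (sF m) m (g (m, sF m)) else (fun _ => 0%R).
have Qs : forall n, Qp f0 f xb n (sF n).
  by elim => [|n IH]; [exact: Qp0 H | exact: (hg (n, sF n))].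
exists (fun j => sF j.+1 j).
have e : forall n j, (j < n)%N -> sF n j = sF j.+1 j.
  elim => // n IH j; rewrite ltnS leq_eqVlt => /orP [/eqP ->|jn] //=.
  by rewrite /upd ltn_eqF //; exact: IH.
by move=> n; apply: Qp_ext (Qs n) => j jn; exact: e.
Qed.

Lemma tail_exists {R : realType} {X : lmodType R} {f0 : X -> \bar R} {f xb x0} {lam : nat -> R} n :
  Hyp f0 f xb x0 -> Qp f0 f xb n lam ->
  exists2 nu, (0 <= nu)%R & forall x, goodE f0 f x ->
    (fine (f0 xb) <= fine (f0 x) + \sum_(0 <= j < n) lam j * fine (f j x) + nu * fine (TT f n x))%R.
Proof.
move=> H [l0 Q]; have H' := H; case: H' => p0 c0 pf cf [_ [_ sl]].
have gx0 := goodE_x0 H.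
pose F := (fun x => fine (f0 x) + \sum_(0 <= j < n) lam j * fine (f j x))%R.
pose G := (fun x => fine (TT f n x)).
have [mu mu0 hmu] : exists2 mu, (0 <= mu)%R & forall x, goodE f0 f x -> (fine (f0 xb) <= F x + mu * G x)%R;
  first apply: stepA.
- move=> x y t gx gy t01; exact: goodE_conv.
- by move=> x y t gx gy t01; rewrite /F; exact: (obj_conv H l0 gx gy t01).
- move=> x y t gx gy t01; apply: (conv_real H gx gy t01 (fun z gz => fin_TT pf gz)).
  exact: (TT_conv _ _ n _ _ _ pf cf gx gy t01).
- by move=> x gx hn; apply: Q => //; exact: fin_le0 (fin_TT pf gx) hn.
- exists x0 => //; apply: fin_lt0 (fin_TT pf gx0) _.
  by apply: le_lt_trans (TT_le_sup _ _ _) sl.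
by exists mu.
Qed.

Lemma nu_bound {R : realType} {X : lmodType R} {f0 : X -> \bar R} {f xb x0} {lam : nat -> R} n nu :
  Hyp f0 f xb x0 -> Qp f0 f xb n lam -> (0 <= nu)%R ->
  (forall x, goodE f0 f x ->
    (fine (f0 xb) <= fine (f0 x) + \sum_(0 <= j < n) lam j * fine (f j x) + nu * fine (TT f n x))%R) ->
  (\sum_(0 <= j < n) lam j + nu <=
    (fine (f0 x0) - fine (f0 xb)) / (- fine (ereal_sup (range (fun k => f k x0)))))%R.
Proof.
move=> H [l0 Q] nu0 hnu; have H' := H; case: H' => p0 c0 pf cf [_ [_ sl]].
have gx0 := goodE_x0 H.
have fs := fin_sup pf gx0.
set S := ereal_sup _ in fs sl *.
have Sneg : (fine S < 0)%R by exact: fin_lt0.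
have hk : forall j, (fine (f j x0) <= fine S)%R.
  by move=> j; apply: fine_le => //; [exact: (fin_fk pf gx0)|exact: fk_le_sup].
have hT : (fine (TT f n x0) <= fine S)%R.
  by apply: fine_le => //; [exact: (fin_TT pf gx0)|exact: TT_le_sup].
have h := hnu _ gx0.
have hs : (\sum_(0 <= j < n) lam j * fine (f j x0) <= (\sum_(0 <= j < n) lam j) * fine S)%R.
  rewrite mulr_suml; apply: ler_sum_nat => j /andP[_ jn].
  by apply: ler_wpM2l; [exact: l0|exact: hk].
have hn : (nu * fine (TT f n x0) <= nu * fine S)%R by apply: ler_wpM2l.
rewrite ler_pdivlMr ?oppr_gt0 //.
set s := (\sum_(0 <= j < n) lam j)%R in hs *.
nra.
Qed.

Local Open Scope ereal_scope.
Local Open Scope ereal_scope.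

Lemma dadde_y {R : realType} (x : \bar R) : dual_adde x +oo = +oo.
Proof. by case: x. Qed.

Lemma dadd_ye {R : realType} (x : \bar R) : dual_adde +oo x = +oo.
Proof. by case: x. Qed.

Lemma emulc_fin {R : realType} (l : R) (a : \bar R) :
  a \is a fin_num -> emulc l a = (l * fine a)%:E.
Proof. by move=> fa; rewrite /emulc; case: a fa. Qed.

Lemma emulc_y {R : realType} (l : R) : emulc l +oo = +oo.
Proof. by []. Qed.

Lemma emulc_ge0 {R : realType} (l : R) (a : \bar R) : (0 <= l)%R -> 0 <= a -> 0 <= emulc l a.
Proof. by move=> l0 a0; rewrite /emulc; case: ifP => // _; apply: mule_ge0. Qed.

Lemma emulc_Ny {R : realType} (l : R) (a : \bar R) : a != -oo -> emulc l a != -oo.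
Proof. by rewrite /emulc; case: a => // r _; case: ifP. Qed.

Lemma series_term {R : realType} {X : Type} (f : nat -> X -> \bar R) (l : nat -> R) m x k :
  (forall k, (0 <= l k)%R) -> (m <= k)%N ->
  emulc (l k) (Order.max (f k x) 0) <= \sum_(m <= i <oo) emulc (l i) (Order.max (f i x) 0).
Proof.
move=> l0 mk.
have u0 : forall i, 0 <= emulc (l i) (Order.max (f i x) 0).
  by move=> i; apply: emulc_ge0 => //; rewrite le_max lexx orbT.
apply: le_trans (nneseries_lim_ge k.+1 (fun i _ _ => u0 i)).
rewrite big_nat_recr //=; apply: leeDr.
by apply: sume_ge0 => i _; exact: u0.
Qed.

Lemma series_ge0 {R : realType} {X : Type} (f : nat -> X -> \bar R) (l : nat -> R) m x :
  (forall k, (0 <= l k)%R) ->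
  0 <= \sum_(m <= i <oo) emulc (l i) (Order.max (f i x) 0).
Proof.
move=> l0; apply: nneseries_ge0 => i _ _; apply: emulc_ge0 => //.
by rewrite le_max lexx orbT.
Qed.

Lemma series_TT {R : realType} {X : Type} (f : nat -> X -> \bar R) (l : nat -> R) m x (a c : R) :
  (forall k, (0 <= l k)%R) -> (forall k, (m <= k)%N -> l k = a) -> (0 < a)%R ->
  \sum_(m <= i <oo) emulc (l i) (Order.max (f i x) 0) = c%:E ->
  TT f m x <= (c / a)%:E.
Proof.
move=> l0 la a0 hc; apply/esups_leP => k mk.
have := @series_term _ _ f l m x k l0 mk; rewrite hc la //.
case: (f k x) => [r||] //= h.
  have : ((a * Order.max r 0%R) <= c)%R.
    by move: h; rewrite /emulc -EFin_max /= -EFinM lee_fin.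
  rewrite lee_fin ler_pdivlMr // mulrC => h2; apply: le_trans h2.
  by rewrite ler_pM2r // le_max lexx.
exact: leNye.
Qed.

Lemma sum_fin {R : realType} {X : Type} (f : nat -> X -> \bar R) (l : nat -> R) m x :
  (forall k, f k x \is a fin_num) ->
  \sum_(0 <= k < m) emulc (l k) (f k x) = (\sum_(0 <= k < m) l k * fine (f k x))%:E.
Proof. by move=> fx; rewrite -sumEFin; apply: eq_bigr => k _; exact: emulc_fin. Qed.

Lemma sum_y {R : realType} {X : Type} (f : nat -> X -> \bar R) (l : nat -> R) m x k :
  (forall k, f k x != -oo) -> f k x = +oo -> (k < m)%N ->
  \sum_(0 <= k < m) emulc (l k) (f k x) = +oo.
Proof.
move=> fN fk km; apply/esum_eqyP; first by move=> i _; exact: emulc_Ny.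
by exists k; split => //; [rewrite mem_index_iota | rewrite fk].
Qed.

Lemma dadd3_fin {R : realType} (a b c : R) :
  dual_adde (dual_adde a%:E b%:E) c%:E = (a + b + c)%:E.
Proof. by []. Qed.

Lemma not_good_TT {R : realType} {X : Type} (f0 : X -> \bar R) (f : nat -> X -> \bar R) x m :
  f0 x < +oo -> ~ goodE f0 f x -> (forall k, f k x < +oo) -> TT f m x = +oo.
Proof.
move=> f0x ng fk; apply/eqP; rewrite eq_le leey /=; rewrite leNgt; apply/negP => h.
apply: ng; split => //; rewrite -esups0; exact: (esups_finite _ _ fk h).
Qed.

Lemma lam_ge0 {R : realType} {X : lmodType R} {f0 : X -> \bar R} {f xb} {lam : nat -> R} :
  (forall n, Qp f0 f xb n lam) -> forall k, (0 <= lam k)%R.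
Proof. by move=> Q k; apply: (Q k.+1).1. Qed.

Lemma Dm_lower {R : realType} {X : lmodType R} {f0 : X -> \bar R} {f xb x0} {lam : nat -> R} m nu :
  Hyp f0 f xb x0 -> (forall n, Qp f0 f xb n lam) -> (0 <= nu)%R ->
  (forall x, goodE f0 f x ->
    (fine (f0 xb) <= fine (f0 x) + \sum_(0 <= j < m) lam j * fine (f j x) + nu * fine (TT f m x))%R) ->
  forall x, (fine (f0 xb))%:E <=
    lagDm m f0 f (fun k => if (k < m)%N then lam k else (nu + 1)%R) x.
Proof.
move=> H Q nu0 hnu x; have H' := H; case: H' => p0 c0 pf cf _.
set l := fun k => _.
have l0 : forall k, (0 <= l k)%R.
  by move=> k; rewrite /l; case: ifP => _; [exact: (lam_ge0 Q k) | lra].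
have lt : forall k, (m <= k)%N -> l k = (nu + 1)%R by move=> k mk; rewrite /l ltnNge mk.
rewrite /lagDm.
set A := \sum_(0 <= k < m) _; set C := \sum_(m <= k <oo) _.
have C0 : 0 <= C by exact: series_ge0.
have [Cy|Cfin] := eqVneq C +oo; first by rewrite Cy dadde_y leey.
have [c Cc] : exists c, C = c%:E.
  by move: C0 Cfin; case: C => [r||] // _ _; exists r.
have TTc := @series_TT _ _ f l m x (nu + 1)%R c l0 lt (ltr_wpDl nu0 ltr01) Cc.
have [f0y|f0f] := eqVneq (f0 x) +oo; first by rewrite f0y !dadd_ye leey.
have f0x : f0 x < +oo by rewrite ltey.
have [gx|ngx] := pselect (goodE f0 f x); last first.
  have [[k fk]|nk] := pselect (exists k, f k x = +oo).
    have [km|km] := ltnP k m.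
      rewrite /A (@sum_y _ _ f l m x k _ fk km) ?dadde_y ?dadd_ye ?leey // => i; by case: (pf i) => /(_ x).
    have h := @series_term _ _ f l m x k l0 km.
    rewrite -/C Cc fk maxye in h.
    by move: h; rewrite /emulc.
  have fk : forall k, f k x < +oo.
    by move=> k; rewrite ltey; apply/negP => /eqP e; apply: nk; exists k.
  by move: TTc; rewrite (not_good_TT _ _ _ m f0x ngx fk).
rewrite /A sum_fin; last by move=> k; exact: (fin_fk pf gx).
rewrite -(fineK (fin_f0 p0 gx)) Cc dadd3_fin lee_fin.
have hT : (fine (TT f m x) <= c / (nu + 1))%R.
  by rewrite -lee_fin (fineK (fin_TT pf gx)).
have cge0 : (0 <= c)%R by rewrite -lee_fin -Cc.
move: hT; rewrite ler_pdivlMr; last lra.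
move=> hT; have := hnu x gx.
set T := fine (TT f m x) in hT *.
have : (nu * T <= c)%R.
  have [T0|T0] := leP 0%R T.
    apply: le_trans hT; rewrite mulrDr mulr1 mulrC; lra.
  have := mulr_ge0_le0 nu0 (ltW T0); lra.
have -> : (\sum_(0 <= k < m) l k * fine (f k x) = \sum_(0 <= j < m) lam j * fine (f j x))%R.
  by apply: eq_big_nat => k /andP[_ km]; rewrite /l km.
lra.
Qed.

Local Open Scope ereal_scope.
Local Open Scope ereal_scope.

Lemma sum_npos_eq0 {R : realType} (F : nat -> R) m k :
  (forall j, (F j <= 0)%R) -> (\sum_(0 <= j < m) F j)%R = 0%R -> (k < m)%N -> F k = 0%R.
Proof.
move=> F0 + km.
rewrite (big_cat_nat (leq0n k) (ltnW km)) (big_ltn km) /= => h.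
have a : (\sum_(0 <= j < k) F j <= 0)%R by apply: sumr_le0.
have b : (\sum_(k.+1 <= j < m) F j <= 0)%R by apply: sumr_le0.
have := F0 k; lra.
Qed.

Lemma fxb_le0 {R : realType} {X : lmodType R} {f0 : X -> \bar R} {f xb x0} k :
  Hyp f0 f xb x0 -> f k xb <= 0.
Proof. by case=> _ _ _ _ [[[_ h] _] _]. Qed.

Lemma Dm_xb {R : realType} {X : lmodType R} {f0 : X -> \bar R} {f xb x0} (lam : nat -> R) m :
  Hyp f0 f xb x0 -> (forall k, (0 <= lam k)%R) ->
  lagDm m f0 f lam xb = (fine (f0 xb) + \sum_(0 <= k < m) lam k * fine (f k xb))%:E.
Proof.
move=> H l0; have H' := H; case: H' => p0 c0 pf cf _.
have gb := goodE_xb H.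
rewrite /lagDm sum_fin; last by move=> k; exact: (fin_fk pf gb).
rewrite eseries0; last first.
  by move=> i _ _; rewrite (max_idPr (fxb_le0 i H)) emulc_fin //= mulr0.
by rewrite -(fineK (fin_f0 p0 gb)) -[0]/(0%R%:E) dadd3_fin addr0.
Qed.

Lemma terms_xb_le0 {R : realType} {X : lmodType R} {f0 : X -> \bar R} {f xb x0} (lam : nat -> R) :
  Hyp f0 f xb x0 -> (forall k, (0 <= lam k)%R) -> forall k, (lam k * fine (f k xb) <= 0)%R.
Proof.
move=> H l0 k; have H' := H; case: H' => p0 c0 pf cf _.
apply: mulr_ge0_le0 => //; rewrite -lee_fin fineK; first exact: fxb_le0 H.
exact: (fin_fk pf (goodE_xb H)).
Qed.

Lemma valDm_le {R : realType} {X : lmodType R} {f0 : X -> \bar R} {f xb x0} m :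
  Hyp f0 f xb x0 -> valDm m f0 f <= (fine (f0 xb))%:E.
Proof.
move=> H; apply: ge_ereal_sup => _ [lam [[l0 _] ->]].
apply: le_trans (ereal_inf_lbound _) _; first by exists xb.
rewrite (Dm_xb lam m H l0) lee_fin gerDl.
by apply: sumr_le0 => k _; exact: (terms_xb_le0 lam H l0 k).
Qed.

Lemma partii {R : realType} {X : lmodType R} {f0 : X -> \bar R} {f xb x0} (lam : nat -> R) m :
  Hyp f0 f xb x0 -> (forall n, Qp f0 f xb n lam) ->
    (exists lam, solutionDm m f0 f lam /\ f0 xb = dualDm m f0 f lam) /\
    (forall lam, solutionDm m f0 f lam ->
       lagDm m f0 f lam xb = dualDm m f0 f lam /\
       forall k, (k < m)%N -> emulc (lam k) (f k xb) = 0).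
Proof.
move=> H Q; have H' := H; case: H' => p0 c0 pf cf _.
have gb := goodE_xb H.
set p := fine (f0 xb).
have [nu nu0 hnu] := tail_exists m H (Q m).
have B := nu_bound m nu H (Q m) nu0 hnu.
set Bd := (_ / _)%R in B.
pose lm := fun k => if (k < m)%N then lam k else (nu + 1)%R.
have lm0 : forall k, (0 <= lm k)%R.
  by move=> k; rewrite /lm; case: ifP => _; [exact: (lam_ge0 Q k)|lra].
have lin : linf_plus lm.
  split => //.
  exists (Bd + 1)%R => k; rewrite /lm; case: ifP => _; last first.
    have : (0 <= \sum_(0 <= j < m) lam j)%R by apply: sumr_ge0 => j _; exact: (lam_ge0 Q j).
    lra.
  have [nu' nu0' hnu'] := tail_exists k.+1 H (Q k.+1).
  have B' := nu_bound k.+1 nu' H (Q k.+1) nu0' hnu'.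
  rewrite big_nat_recr //= in B'.
  have : (0 <= \sum_(0 <= j < k) lam j)%R by apply: sumr_ge0 => j _; exact: (lam_ge0 Q j).
  rewrite -/Bd in B'; lra.
have dlm : dualDm m f0 f lm = p%:E.
  apply/le_anti; apply/andP; split.
    apply: le_trans (ereal_inf_lbound _) _; first by exists xb.
    rewrite (Dm_xb lm m H lm0) lee_fin gerDl.
    by apply: sumr_le0 => k _; exact: (terms_xb_le0 lm H lm0 k).
  by apply: le_ereal_inf_tmp => _ [x _ <-]; exact: (Dm_lower m nu H Q nu0 hnu x).
have valp : valDm m f0 f = p%:E.
  apply/le_anti; rewrite (valDm_le m H) /=.
  by apply: le_ereal_sup_tmp; exists (dualDm m f0 f lm) => //; [exists lm | rewrite dlm].
split.
  exists lm; split; first by split => //; rewrite dlm valp.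
  by rewrite dlm /p fineK //; exact: (fin_f0 p0 gb).
move=> l [[l0 _] dl].
have e := Dm_xb l m H l0.
have sle := sumr_le0 (index_iota 0 m) (fun k _ => terms_xb_le0 l H l0 k).
have s0 : (\sum_(0 <= k < m) l k * fine (f k xb) = 0)%R.
  have : dualDm m f0 f l <= lagDm m f0 f l xb by apply: ereal_inf_lbound; exists xb.
  rewrite dl valp e lee_fin -/p => h; apply/le_anti; rewrite sle /=; lra.
split; first by rewrite e s0 addr0 dl valp.
move=> k km; rewrite emulc_fin; last exact: (fin_fk pf gb).
by rewrite (sum_npos_eq0 _ _ _ (terms_xb_le0 l H l0) s0 km).
Qed.

Local Close Scope ereal_scope.

Lemma cluster_seq {R : realType} (u : nat -> R) (a b : R) :
  (forall n, a <= u n <= b) ->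
  exists2 c, a <= c <= b & forall e, 0 < e -> forall N, exists n, (N <= n)%N /\ `|u n - c| < e.
Proof.
move=> hu.
have hF : (u @ \oo) `[a, b]%classic.
  by exists 0%N => // n _; rewrite /= in_itv /=; exact: hu.
have [c [cab cc]] := @segment_compact R a b (u @ \oo) _ hF.
exists c; first by move: cab; rewrite /= in_itv.
move=> e e0 N.
have hA : (u @ \oo) (u @` [set n | (N <= n)%N]) by exists N => // n /= Nn; exists n.
have [_ [[n Nn <-] bn]] := cc _ _ hA (nbhsx_ballx c e e0); exists n; split => //.
by rewrite distrC; move: bn; rewrite /ball /=.
Qed.

Local Open Scope ereal_scope.

Lemma limn_esup_y {R : realType} (u : (\bar R)^nat) :
  (forall n, esups u n = +oo) -> limn_esup u = +oo.
Proof. by move=> h; rewrite limn_esupE; apply/ereal_inf_pinfty => _ [n _ <-]; rewrite h. Qed.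

Lemma lagD_bad {R : realType} {X : lmodType R} {f0 : X -> \bar R} {f xb x0} (lam : nat -> R) (c : R) x :
  Hyp f0 f xb x0 -> ~ goodE f0 f x -> lagD f0 f lam c x = +oo.
Proof.
move=> H ngx; have H' := H; case: H' => p0 c0 pf cf _.
have [f0y|f0f] := eqVneq (f0 x) +oo; first by rewrite /lagD f0y !dadd_ye.
have f0x : f0 x < +oo by rewrite ltey.
have [[k fk]|nk] := pselect (exists k, f k x = +oo).
  rewrite /lagD limn_esup_y ?dadde_y ?dadd_ye // => n.
  apply/eqP; rewrite eq_le leey /=.
  apply: le_trans (esups_ge _ _ (maxn n k.+1) (leq_maxl _ _)).
  rewrite (@sum_y _ _ f lam _ x k) ?leey //; first by move=> i; case: (pf i) => /(_ x).
  by rewrite leq_max ltnSn orbT.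
have fk : forall k, f k x < +oo.
  by move=> k; rewrite ltey; apply/negP => /eqP e; apply: nk; exists k.
rewrite /lagD; have -> : finf f x = +oo.
  by rewrite /finf; apply: limn_esup_y => n; exact: (not_good_TT _ _ _ n f0x ngx fk).
by rewrite emulc_y dadde_y.
Qed.

Lemma keyK {R : realType} {X : lmodType R} {f0 : X -> \bar R} {f xb x0} (lam : nat -> R)
  (nu : nat -> R) (c : R) x :
  Hyp f0 f xb x0 -> (forall n, (0 <= nu n)%R) ->
  (forall n x, goodE f0 f x ->
    (fine (f0 xb) <= fine (f0 x) + \sum_(0 <= j < n) lam j * fine (f j x) + nu n * fine (TT f n x))%R) ->
  (forall e, (0 < e)%R -> forall N, exists n, (N <= n)%N /\ (`|nu n - c| < e)%R) ->
  goodE f0 f x ->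
  forall r s : R,
    limn_esup (fun n => \sum_(0 <= k < n) emulc (lam k) (f k x)) < r%:E ->
    finf f x < s%:E ->
    (fine (f0 xb) - fine (f0 x) <= r + c * s)%R.
Proof.
move=> H nu0 hnu hc gx r s hA hL; have H' := H; case: H' => p0 c0 pf cf _.
have [N1 hN1] := ev_lt _ _ hA.
move: hL; rewrite /finf limn_esupE => /ereal_inf_lt [_ [N2 _ <-]] hN2.
apply/ler_addgt0Pr => e e0.
have se : (0 < e / (`|s| + 1))%R by apply: divr_gt0 => //; rewrite ltr_wpDl.
have [n [Nn hn]] := hc _ se (maxn N1 N2).
have h := hnu n x gx.
have hP : (\sum_(0 <= j < n) lam j * fine (f j x) <= r)%R.
  have := hN1 n (leq_trans (leq_maxl _ _) Nn).
  rewrite sum_fin; last by move=> k; exact: (fin_fk pf gx).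
  by rewrite lte_fin => /ltW.
have hT : (fine (TT f n x) <= s)%R.
  have : TT f n x <= esups (fun k => f k x) N2.
    by apply: nonincreasing_esups; exact: (leq_trans (leq_maxr _ _) Nn).
  move/le_lt_trans => /(_ _ hN2).
  by rewrite -(fineK (fin_TT pf gx)) lte_fin => /ltW.
have h1 : (nu n * fine (TT f n x) <= nu n * s)%R by apply: ler_wpM2l.
have h2 : (nu n * s - c * s <= `|nu n - c| * `|s|)%R.
  by rewrite -mulrBl -normrM; exact: ler_norm.
have h3 : (`|nu n - c| * `|s| <= e)%R.
  have hs0 : (0 <= `|s|)%R by [].
  have : (`|nu n - c| * `|s| <= e / (`|s| + 1) * `|s|)%R.
    by apply: ler_wpM2r => //; exact: ltW.
  move/le_trans; apply.
  have hs1 : (0 < `|s| + 1)%R by lra.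
  rewrite mulrAC ler_pdivrMr //; nra.
lra.
Qed.

Lemma lagD_good {R : realType} {X : lmodType R} {f0 : X -> \bar R} {f xb x0} (lam : nat -> R)
  (nu : nat -> R) (c : R) x :
  Hyp f0 f xb x0 -> (forall n, (0 <= nu n)%R) ->
  (forall n x, goodE f0 f x ->
    (fine (f0 xb) <= fine (f0 x) + \sum_(0 <= j < n) lam j * fine (f j x) + nu n * fine (TT f n x))%R) ->
  (0 <= c)%R ->
  (forall e, (0 < e)%R -> forall N, exists n, (N <= n)%N /\ (`|nu n - c| < e)%R) ->
  goodE f0 f x -> (fine (f0 xb))%:E <= lagD f0 f lam c x.
Proof.
move=> H nu0 hnu c0 hc gx; have H' := H; case: H' => p0 _ pf cf _.
have K := keyK lam nu c x H nu0 hnu hc gx.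
set p := fine (f0 xb) in K *; set F0 := fine (f0 x) in K.
have hT0 := fin_TT (n := 0%N) pf gx.
set s0 := (fine (TT f 0%N x) + 1)%R.
have hL0 : finf f x < s0%:E.
  apply: le_lt_trans (limsup_le_esups _ 0%N) _.
  by rewrite -/(TT f 0%N x) -(fineK hT0) lte_fin /s0 ltrDl.
rewrite /lagD -(fineK (fin_f0 p0 gx)) -/F0.
set A := limn_esup _ in K *.
case EA : A => [a||].
- set L := finf f x in hL0 K *.
  case EL : L => [l||].
  + rewrite emulc_fin // dadd3_fin lee_fin /=.
    apply/ler_addgt0Pr => e e0.
    pose d := (e / (2 * (c + 1)))%R.
    have d0 : (0 < d)%R by rewrite /d divr_gt0 //; lra.
    have hd : ((c + 1) * d = e / 2)%R by rewrite /d; field; lra.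
    have := K (a + e / 2)%R (l + d)%R; rewrite EA EL !lte_fin.
    have -> : (a < a + e / 2)%R by rewrite ltrDl; lra.
    have -> : (l < l + d)%R by rewrite ltrDl.
    move=> /(_ isT isT) h; nra.
  + by rewrite EL in hL0.
  + have [->|cpos] := eqVneq c 0%R.
      rewrite /emulc /= mul0e -[0]/(0%R%:E) dadd3_fin lee_fin.
      apply/ler_addgt0Pr => e e0.
      have := K (a + e)%R 0%R; rewrite EA EL !lte_fin ltrDl e0 => /(_ isT (ltNyr _)); rewrite mulr0; lra.
    have cp : (0 < c)%R by rewrite lt_neqAle eq_sym cpos.
    exfalso.
    pose s := (- (`|p - F0| + `|a| + 2) / c)%R.
    have cs : (c * s = - (`|p - F0| + `|a| + 2))%R by rewrite /s; field; lra.
    have := K (a + 1)%R s; rewrite EA EL !lte_fin ltrDl ltr01 => /(_ isT (ltNyr _)).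
    rewrite cs; have := @lerNnormlW R (p - F0)%R _ (lexx _); have := @ler_norm R a.
    have : (0 <= `|a|)%R by [].
    lra.
- by rewrite dadde_y dadd_ye leey.
- exfalso.
  have := K (p - F0 - c * s0 - 1)%R s0; rewrite EA ltNye => /(_ isT hL0); lra.
Qed.

Local Open Scope ereal_scope.
Local Open Scope ereal_scope.

Lemma series_le {R : realType} (u : nat -> R) (B : R) :
  (forall k, (0 <= u k)%R) -> (forall n, (\sum_(0 <= k < n) u k <= B)%R) ->
  \sum_(0 <= k <oo) (u k)%:E <= B%:E.
Proof.
move=> u0 hB; apply: lime_le.
  by apply: is_cvg_nneseries => n _ _; rewrite lee_fin.
by apply: nearW => n; rewrite sumEFin lee_fin.
Qed.

Lemma dadde_le_l {R : realType} {x y : \bar R} : y <= 0 -> dual_adde x y <= x.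
Proof.
case: x => [r||]; case: y => [s||] //= h; rewrite /dual_adde //=.
  by rewrite lee_fin gerDl -lee_fin.
exact: leNye.
Qed.

Lemma dadde_eq_l {R : realType} {r : R} {y : \bar R} : y <= 0 -> dual_adde r%:E y = r%:E -> y = 0.
Proof.
case: y => [s||] //= h; rewrite /dual_adde //= => -[e].
by congr EFin; lra.
Qed.

Lemma lagD_xb {R : realType} {X : lmodType R} {f0 : X -> \bar R} {f xb x0} (l : nat -> R) (li : R) :
  Hyp f0 f xb x0 -> (forall k, (0 <= l k)%R) -> (0 <= li)%R ->
  [/\ limn_esup (fun n => \sum_(0 <= k < n) emulc (l k) (f k xb)) <= 0,
      emulc li (finf f xb) <= 0,
      lagD f0 f l li xb = dual_adde (dual_adde (fine (f0 xb))%:E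
         (limn_esup (fun n => \sum_(0 <= k < n) emulc (l k) (f k xb)))) (emulc li (finf f xb)) &
      (limn_esup (fun n => \sum_(0 <= k < n) emulc (l k) (f k xb)) = 0 ->
        forall k, emulc (l k) (f k xb) = 0)].
Proof.
move=> H l0 li0; have H' := H; case: H' => p0 _ pf cf _.
have gb := goodE_xb H.
have tl := terms_xb_le0 l H l0.
have Se : forall n, \sum_(0 <= k < n) emulc (l k) (f k xb) = (\sum_(0 <= k < n) l k * fine (f k xb))%:E.
  by move=> n; apply: sum_fin => k; exact: (fin_fk pf gb).
have mono : forall n k, (n <= k)%N ->
    (\sum_(0 <= j < k) l j * fine (f j xb) <= \sum_(0 <= j < n) l j * fine (f j xb))%R.
  move=> n k nk; rewrite (big_cat_nat (leq0n n) nk) /= gerDl.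
  by apply: sumr_le0 => j _; exact: tl.
have AS : forall n, limn_esup (fun n => \sum_(0 <= k < n) emulc (l k) (f k xb)) <=
    (\sum_(0 <= k < n) l k * fine (f k xb))%:E.
  move=> n; apply: le_trans (limsup_le_esups _ n) _.
  by apply/esups_leP => k nk; rewrite Se lee_fin; exact: mono.
have L0 : finf f xb <= 0.
  apply: le_trans (limsup_le_esups _ 0%N) _.
  by apply/esups_leP => k _; exact: fxb_le0 H.
split.
- by apply: le_trans (AS 0%N) _; rewrite big_geq.
- rewrite /emulc; case: ifP => [/eqP e|_]; first by rewrite e in L0.
  exact: mule_ge0_le0.
- by rewrite /lagD -(fineK (fin_f0 p0 gb)).
move=> A0 k; rewrite emulc_fin; last exact: (fin_fk pf gb).
congr EFin; apply: (sum_npos_eq0 _ _ _ tl) (ltnSn k).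
apply/le_anti/andP; split; first by apply: sumr_le0 => j _; exact: tl.
by have := AS k.+1; rewrite A0 lee_fin.
Qed.

Lemma lagD_xb_le {R : realType} {X : lmodType R} {f0 : X -> \bar R} {f xb x0} (l : nat -> R) (li : R) :
  Hyp f0 f xb x0 -> (forall k, (0 <= l k)%R) -> (0 <= li)%R ->
  lagD f0 f l li xb <= (fine (f0 xb))%:E.
Proof.
move=> H l0 li0; have [A0 B0 -> _] := lagD_xb l li H l0 li0.
by apply: le_trans (dadde_le_l B0) _; exact: dadde_le_l.
Qed.

Lemma valD_le {R : realType} {X : lmodType R} {f0 : X -> \bar R} {f xb x0} :
  Hyp f0 f xb x0 -> valD f0 f <= (fine (f0 xb))%:E.
Proof.
move=> H; apply: ge_ereal_sup => _ [l [li [[l0 _] li0 ->]]].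
apply: le_trans (ereal_inf_lbound _) _; first by exists xb.
exact: (lagD_xb_le l li H l0 li0).
Qed.

Lemma parti {R : realType} {X : lmodType R} {f0 : X -> \bar R} {f xb x0} (lam : nat -> R) :
  Hyp f0 f xb x0 -> (forall n, Qp f0 f xb n lam) ->
  ((exists lam li, solutionD f0 f lam li /\ f0 xb = dualD f0 f lam li) /\
   (forall lam li, solutionD f0 f lam li ->
      [/\ lagD f0 f lam li xb = dualD f0 f lam li,
          forall k, emulc (lam k) (f k xb) = 0
        & emulc li (finf f xb) = 0])).
Proof.
move=> H Q; have H' := H; case: H' => p0 _ pf cf _.
have gb := goodE_xb H.
set p := fine (f0 xb).
have hex : forall n, exists nu, (0 <= nu)%R /\ forall x, goodE f0 f x ->
    (p <= fine (f0 x) + \sum_(0 <= j < n) lam j * fine (f j x) + nu * fine (TT f n x))%R.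
  by move=> n; have [nu nu0 hnu] := tail_exists n H (Q n); exists nu.
have [nu hnu] := choice hex.
set Bd := ((fine (f0 x0) - p) / (- fine (ereal_sup (range (fun k => f k x0)))))%R.
have hB : forall n, (\sum_(0 <= j < n) lam j + nu n <= Bd)%R.
  by move=> n; exact: (nu_bound n (nu n) H (Q n) (hnu n).1 (hnu n).2).
have lam0 := lam_ge0 Q.
have nub : forall n, (0 <= nu n <= Bd)%R.
  move=> n; rewrite (hnu n).1 /=; have := hB n.
  have : (0 <= \sum_(0 <= j < n) lam j)%R by apply: sumr_ge0 => j _.
  lra.
have [c /andP[c0 _] hc] := cluster_seq nu 0%R Bd nub.
have l1 : l1_plus lam.
  split => //; apply: le_lt_trans (ltry Bd); apply: (series_le lam Bd lam0) => n.
  have := hB n; have := (hnu n).1; lra.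
have dl : dualD f0 f lam c = p%:E.
  apply/le_anti/andP; split.
    apply: le_trans (ereal_inf_lbound _) _; first by exists xb.
    exact: (lagD_xb_le lam c H lam0 c0).
  apply: le_ereal_inf_tmp => _ [x _ <-].
  have [gx|ngx] := pselect (goodE f0 f x); last by rewrite (lagD_bad lam c x H ngx) leey.
  exact: (lagD_good lam nu c x H (fun n => (hnu n).1) (fun n => (hnu n).2) c0 hc gx).
have valp : valD f0 f = p%:E.
  apply/le_anti; rewrite (valD_le H) /=.
  by apply: le_ereal_sup_tmp; exists (dualD f0 f lam c); [exists lam, c | rewrite dl].
split.
  exists lam, c; split; first by split => //; rewrite dl valp.
  by rewrite dl /p fineK //; exact: (fin_f0 p0 gb).
move=> l li [[l0 _] li0 dsol].
have [A0 B0 e Aterms] := lagD_xb l li H l0 li0.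
have ge : p%:E <= lagD f0 f l li xb.
  by rewrite -valp -dsol; apply: ereal_inf_lbound; exists xb.
have le := lagD_xb_le l li H l0 li0.
have eq : lagD f0 f l li xb = p%:E by apply/le_anti; rewrite ge le.
set A := limn_esup _ in A0 e Aterms.
set B := emulc li (finf f xb) in B0 e *.
have eA : dual_adde p%:E A = p%:E.
  apply/le_anti/andP; split; first exact: dadde_le_l.
  by rewrite -[X in X <= _]eq e; exact: dadde_le_l.
have A00 := dadde_eq_l A0 eA.
have eB : dual_adde p%:E B = p%:E by rewrite -{2}eq e eA.
split.
- by rewrite eq dsol valp.
- exact: Aterms.
- exact: dadde_eq_l B0 eB.
Qed.

Local Open Scope ereal_scope.

Theorem corollary3p5 (R : realType) (X : completeNormedModType R)
  (f0 : X -> \bar R) (f : nat -> X -> \bar R) (xb : X) :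
  proper_efun f0 -> convex_efun f0 ->
  (forall k, proper_efun (f k)) -> (forall k, convex_efun (f k)) ->
  feasible f0 f !=set0 ->
  solutionP f0 f xb ->
  (exists x, edom f0 x /\ ereal_sup (range (fun k => f k x)) < 0) ->
  ((exists lam li, solutionD f0 f lam li /\ f0 xb = dualD f0 f lam li) /\
   (forall lam li, solutionD f0 f lam li ->
      [/\ lagD f0 f lam li xb = dualD f0 f lam li,
          forall k, emulc (lam k) (f k xb) = 0
        & emulc li (finf f xb) = 0]))
  /\
  (forall m : nat,
    (exists lam, solutionDm m f0 f lam /\ f0 xb = dualDm m f0 f lam) /\
    (forall lam, solutionDm m f0 f lam ->
       lagDm m f0 f lam xb = dualDm m f0 f lam /\
       forall k, (k < m)%N -> emulc (lam k) (f k xb) = 0)).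
Proof.
move=> p0 c0 pf cf _ sol [x0 [ex0 sx0]].
have H : Hyp f0 f xb x0 by split.
have [lam Q] := lam_exists H.
split; first exact: (parti lam H Q).
by move=> m; exact: (partii lam m H Q).
Qed.
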